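(* Let $M'=M[D,K]$ be a compatible minor of the weighted uncertainty matroid $\mathcal{M}$. If there is a circuit $C$ of $M'$ containing an element $e$ that has the unique maximum weight in $C$, then $M[D\cup\{e\},K]$ is a compatible minor of $\mathcal{M}$.
   Context: A weighted uncertainty matroid $\mathcal{M}=(E,\mathcal{I},A,w)$ consists of a matroid $M=(E,\mathcal{I})$ on a finite set $E$, for each $e\in E$ a non-empty finite union $A_e$ of bounded real intervals (each open or closed), a weight $w_e\in A_e$, and a query cost $c_e\ge0$. A minimum-weight basis (MWB) is a basis minimizing total weight. A weight assignment is $w^*$ with $w^*_e\in A_e$, consistent with $Q$ if $w^*_e=w_e$ on $Q$. $Q$ verifies an MWB $B$ if for every weight assignment consistent with $Q$, $B$ is an MWB with respect to it; a certificate for $\mathcal{M}$ is a set verifying some MWB, and $c^*$ denotes the minimum cost $\sum_{e\in Q}c_e$ of a certificate for $\mathcal{M}$. For $D,K\subseteq E$, $M[D,K]$ is the matroid obtained from $M$ by deleting $D$ and contracting $K$, with weights restricted to its ground set $E(M[D,K])=E\setminus(D\cup K)$. $M[D,K]$ is a compatible minor of $\mathcal{M}$ if there is a set $Q$ of cost $c^*$ that verifies an MWB $B$ of $\mathcal{M}$ with $K\subseteq B$ and $D\cap B=\emptyset$. *)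

(* Defs.v *)
From HB Require Import structures.
From mathcomp Require Import all_boot all_order all_algebra.
From mathcomp Require Import reals.

Set Implicit Arguments.
Unset Strict Implicit.
Unset Printing Implicit Defensive.

Import Order.TTheory GRing.Theory Num.Theory.
Local Open Scope ring_scope.

Record matroid (E : finType) := Matroid {
  indep : {set E} -> bool;
  indep0 : indep set0;
  indep_sub : forall I J : {set E}, J \subset I -> indep I -> indep J;
  indep_aug : forall I J : {set E}, indep I -> indep J -> (#|I| < #|J|)%N ->
      exists2 x, x \in J :\: I & indep (x |: I)
}.

Section Matroids.
Variable E : finType.
Variable M : matroid E.

Definition rank (X : {set E}) : nat :=
  \max_(I : {set E} | indep M I && (I \subset X)) #|I|.

Definition basis (B : {set E}) : Prop :=
  indep M B /\ forall x, x \notin B -> ~~ indep M (x |: B).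

(* The minor M[D,K] = (M \ D) / K, ground set E \ (D u K). *)
Definition minor_ground (D K : {set E}) : {set E} := ~: (D :|: K).

Definition minor_indep (D K I : {set E}) : bool :=
  (I \subset minor_ground D K) && (rank (I :|: K) == #|I| + rank K)%N.

Definition minor_circuit (D K C : {set E}) : Prop :=
  [/\ C \subset minor_ground D K, ~~ minor_indep D K C &
      forall C' : {set E}, C' \proper C -> minor_indep D K C'].
End Matroids.

Record uinterval (R : realType) := UItv { ilo : R; ihi : R; iclosed : bool }.

Definition in_uitv (R : realType) (I : uinterval R) (x : R) : bool :=
  if iclosed I then (ilo I <= x) && (x <= ihi I) else (ilo I < x) && (x < ihi I).

Definition uitv_nonempty (R : realType) (I : uinterval R) : bool :=
  if iclosed I then ilo I <= ihi I else ilo I < ihi I.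

(* an uncertainty area: a finite union of such intervals *)
Definition in_area (R : realType) (A : seq (uinterval R)) (x : R) : bool :=
  has (fun I => in_uitv I x) A.

Section Uncertainty.
Variables (R : realType) (E : finType) (M : matroid E)
          (A : E -> seq (uinterval R)) (w : E -> R) (c : E -> R).

Definition uncertainty_matroid : Prop :=
  forall e, [/\ (0 < size (A e))%N, all (@uitv_nonempty R) (A e),
                in_area (A e) (w e) & 0 <= c e].

Definition weight (w' : E -> R) (B : {set E}) : R := \sum_(x in B) w' x.

Definition is_MWB (w' : E -> R) (B : {set E}) : Prop :=
  basis M B /\ forall B', basis M B' -> weight w' B <= weight w' B'.

Definition weight_assignment (w' : E -> R) : Prop :=
  forall e, in_area (A e) (w' e).

Definition consistent (Q : {set E}) (w' : E -> R) : Prop :=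
  forall e, e \in Q -> w' e = w e.

Definition verifies (Q B : {set E}) : Prop :=
  forall w', weight_assignment w' -> consistent Q w' -> is_MWB w' B.

Definition certificate (Q : {set E}) : Prop := exists B, verifies Q B.

Definition cost (Q : {set E}) : R := \sum_(e in Q) c e.

Definition min_cost_certificate (Q : {set E}) : Prop :=
  certificate Q /\ forall Q', certificate Q' -> cost Q <= cost Q'.

Definition compatible_minor (D K : {set E}) : Prop :=
  exists Q B, [/\ min_cost_certificate Q, verifies Q B, is_MWB w B,
                  K \subset B & [disjoint D & B]].
End Uncertainty.

(* Main.v *)
Require Import Defs.
From HB Require Import structures.
From mathcomp Require Import all_boot all_order all_algebra.
From mathcomp Require Import reals.
From mathcomp Require Import zify.
Import Order.TTheory GRing.Theory Num.Theory.
Local Open Scope ring_scope.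

Lemma rank_indep (E : finType) (M : matroid E) (I : {set E}) :
  indep M I -> rank M I = #|I|.
Proof.
move=> iI; apply/eqP; rewrite eqn_leq; apply/andP; split.
  by apply/bigmax_leqP => J /andP[_ sJ]; exact: subset_leq_card.
rewrite /rank; apply: (@leq_bigmax_cond _ (fun J : {set E} => indep M J && (J \subset I)) (fun J : {set E} => #|J|) I).
  by rewrite iI subxx.
Qed.

Lemma rank_ge_indep (E : finType) (M : matroid E) (X : {set E}) :
  (#|X| <= rank M X)%N -> indep M X.
Proof.
move=> h; apply/negPn/negP => nX.
have X0 : X != set0 by apply: contraNneq nX => ->; exact: indep0.
have : (rank M X <= #|X|.-1)%N.
  apply/bigmax_leqP => J /andP[iJ sJ].
  have pJ : J \proper X.
    rewrite properEneq sJ andbT; apply: contraNneq nX => <-; exact iJ.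
  have := proper_card pJ; lia.
have : (0 < #|X|)%N by rewrite card_gt0.
lia.
Qed.

Arguments rank_indep {E M I}.
Arguments rank_ge_indep {E M X}.

Theorem mainTheorem9 (R : realType) (E : finType) (M : matroid E)
    (A : E -> seq (uinterval R)) (w c : E -> R) (D K C : {set E}) (e : E) :
  uncertainty_matroid A w c ->
  compatible_minor M A w c D K ->
  minor_circuit M D K C -> e \in C ->
  (forall f, f \in C -> f != e -> w f < w e) ->
  compatible_minor M A w c (e |: D) K.
Proof.
move=> _ [Q [B [mQ vQ [[iB mB] mwB] sKB dDB]]] [sCg nC minC] eC wmax.
exists Q, B; split => //.
rewrite -setI_eq0 setIUl (disjoint_setI0 dDB) setU0 setI_eq0 disjoints1.
apply/negP => eB.
have iK : indep M K by apply: (indep_sub sKB iB).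
have rK := rank_indep iK.
have eK : e \notin K.
  by move: (subsetP sCg e eC); rewrite !inE negb_or => /andP[].
have CK : [disjoint C & K].
  rewrite -setI_eq0; apply/eqP/setP => x; rewrite !inE.
  apply/negP => /andP[xC xK]; move: (subsetP sCg x xC); rewrite !inE xK orbT //.
set I0 := (C :\ e) :|: K.
have iI0 : indep M I0.
  have pC : C :\ e \proper C by rewrite properD1.
  move: (minC _ pC) => /andP[_ /eqP h]; apply: rank_ge_indep.
  by rewrite /I0 h cardsU rK; lia.
have nI0e : ~~ indep M (e |: I0).
  have -> : e |: I0 = C :|: K by rewrite /I0 setUA setD1K.
  apply: contra nC => iCK; rewrite /minor_indep sCg /= rank_indep //.
  by rewrite rK cardsU (disjoint_setI0 CK) cards0 subn0.
pose P J := [&& indep M J, I0 \subset J & J \subset I0 :|: B].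
have PI0 : P I0 by rewrite /P iI0 subxx subsetUl.
have [J PJ maxJ] := @arg_maxnP _ I0 P (fun J => #|J|) PI0.
move: PJ => /and3P[iJ sI0J sJ].
have eJ : e \notin J.
  apply: contraNN nI0e => eJ; apply: (indep_sub _ iJ).
  by rewrite subUset sub1set eJ sI0J.
have cJ : (#|B| <= #|J|)%N.
  rewrite leqNgt; apply/negP => lt.
  have [x /setDP[xB xJ] ixJ] := indep_aug iJ iB lt.
  have : P (x |: J).
    rewrite /P ixJ (subset_trans sI0J (subsetUr _ _)) /= subUset sJ andbT.
    by rewrite sub1set inE xB orbT.
  by move/maxJ; rewrite cardsU1 xJ add1n /= ltnn.
have cB := cardsD1 e B; rewrite eB in cB.
have lt1 : (#|B :\ e| < #|J|)%N by move: cJ; rewrite cB add1n.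
have [x /setDP[xJ xB1] ix] := indep_aug (indep_sub (subD1set B e) iB) iJ lt1.
have xe : x != e by apply: contraNneq eJ => <-.
have xB : x \notin B by move: xB1; rewrite !inE xe.
have xC : x \in C.
  move: (subsetP sJ x xJ); rewrite /I0 !inE (negbTE xB) orbF => /orP[/andP[] //|xK].
  by move: xB; rewrite (subsetP sKB x xK).
have bB' : basis M (x |: (B :\ e)).
  split => // y yB'; apply/negP => iy.
  have lt : (#|B| < #|y |: (x |: (B :\ e))|)%N.
    by rewrite cardsU1 yB' cardsU1 xB1 cB !add1n.
  have [z /setDP[_ zB] izB] := indep_aug iB iy lt.
  by move: (mB z zB); rewrite izB.
have := mwB _ bB'.
rewrite /weight (big_setD1 _ eB) big_setU1 //=.
rewrite lerD2r; apply/negP; rewrite -ltNge; exact: wmax.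
Qed.
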